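(* Let $p$ be a prime and $\Gamma$ a profinite group acting trivially on $\mathbb{F}_p$. If every open subgroup of $\Gamma$ admits the cup product exact sequence property, then every closed subgroup of $\Gamma$ admits the cup product exact sequence property.
   Context: All cohomology is continuous with coefficients in the trivial module $\mathbb{F}_p$. A profinite group $H$ admits the cup product exact sequence property if for every $\chi\in H^1(H,\mathbb{F}_p)=\operatorname{Hom}(H,\mathbb{F}_p)$ the sequence $H^1(\ker\chi,\mathbb{F}_p)\xrightarrow{\operatorname{Cor}}H^1(H,\mathbb{F}_p)\xrightarrow{\chi\cup}H^2(H,\mathbb{F}_p)\xrightarrow{\operatorname{Res}}H^2(\ker\chi,\mathbb{F}_p)$ is exact at $H^1(H,\mathbb{F}_p)$ and at $H^2(H,\mathbb{F}_p)$. *)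

(* Defs.v *)
From mathcomp Require Import all_boot all_algebra.
From mathcomp Require Import boolp classical_sets topology.
Set Implicit Arguments. Unset Strict Implicit. Unset Printing Implicit Defensive.
Import GRing.Theory.
Local Open Scope classical_set_scope.
Local Open Scope ring_scope.

Record profinite_group := ProfiniteGroup {
  pg_car :> topologicalType;
  pg_mul : pg_car -> pg_car -> pg_car;
  pg_inv : pg_car -> pg_car;
  pg_one : pg_car;
  pg_mulA : forall x y z, pg_mul x (pg_mul y z) = pg_mul (pg_mul x y) z;
  pg_mul1g : forall x, pg_mul pg_one x = x;
  pg_mulVg : forall x, pg_mul (pg_inv x) x = pg_one;
  pg_mul_cont : continuous (fun xy : pg_car * pg_car => pg_mul xy.1 xy.2);
  pg_inv_cont : continuous pg_inv;
  pg_compact : compact [set: pg_car];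
  pg_hausdorff : hausdorff_space pg_car;
  pg_tot_disc : totally_disconnected [set: pg_car]
}.

Section Defs.
Variable G : profinite_group.
Local Notation "x * y" := (pg_mul x y) : pg_scope.
Delimit Scope pg_scope with pg.

Definition is_subgroup (H : set G) : Prop :=
  H (pg_one G) /\ (forall x y, H x -> H y -> H (x * y)%pg) /\
  (forall x, H x -> H (pg_inv x)).
Definition closed_subgroup (H : set G) := closed H /\ is_subgroup H.
Definition open_subgroup (H : set G) := open H /\ is_subgroup H.

Variable p : nat.

(** Continuity of a map D -> F_p (F_p discrete) for the subspace topology on
    D : all fibres are relatively open in D. *)
Definition cont_on {X : topologicalType} (D : set X) (f : X -> 'F_p) : Prop :=
  forall a : 'F_p, exists U : set X, open U /\ U `&` D = D `&` f @^-1` [set a].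

(** H^1(H, F_p) = continuous homomorphisms H -> F_p. *)
Definition hom1 (H : set G) (f : G -> 'F_p) : Prop :=
  cont_on H f /\ forall x y, H x -> H y -> f (x * y)%pg = f x + f y.

Definition cocycle2 (H : set G) (c : G -> G -> 'F_p) : Prop :=
  cont_on (H `*` H) (fun xy : G * G => c xy.1 xy.2) /\
  forall x y z, H x -> H y -> H z ->
    c y z - c (x * y)%pg z + c x (y * z)%pg - c x y = 0.
Definition coboundary2 (H : set G) (c : G -> G -> 'F_p) : Prop :=
  exists f : G -> 'F_p, cont_on H f /\
    forall x y, H x -> H y -> c x y = f y - f (x * y)%pg + f x.

Definition cup1 (chi psi : G -> 'F_p) : G -> G -> 'F_p :=
  fun x y => chi x * psi y.

Definition kerH (H : set G) (chi : G -> 'F_p) : set G :=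
  [set g | H g /\ chi g = 0].

Fixpoint pgpow (t : G) (n : nat) : G :=
  if n is n'.+1 then (t * pgpow t n')%pg else pg_one G.

(** Corestriction H^1(ker chi) -> H^1(H) (trivial coefficients): composition
    with the transfer H -> (ker chi)^ab, computed with the transversal
    {t^i | 0 <= i < p} where chi t = 1; the identity when chi = 0 on H. *)
Definition cor1 (H : set G) (chi phi : G -> 'F_p) (g : G) : 'F_p :=
  if pselect (exists x, H x /\ chi x <> 0) then
    let t := xget (pg_one G) [set x | H x /\ chi x = 1] in
    \sum_(i < p)
      phi (pgpow t i * g * pg_inv (pgpow t ((i + nat_of_ord (chi g)) %% p)))%pg
  else phi g.

(** The cup product exact sequence property for the closed subgroup H
    (with its subspace topology), exactness at H^1 and at H^2. *)
Definition cup_exact (H : set G) : Prop :=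
  forall chi, hom1 H chi ->
    (forall psi, hom1 H psi ->
       (coboundary2 H (cup1 chi psi) <->
        exists phi, hom1 (kerH H chi) phi /\ forall g, H g -> psi g = cor1 H chi phi g))
    /\
    (forall c, cocycle2 H c ->
       (coboundary2 (kerH H chi) c <->
        exists psi, hom1 H psi /\
          coboundary2 H (fun x y => c x y - cup1 chi psi x y))).
End Defs.

(* Main.v *)
Require Import Defs.
From mathcomp Require Import all_boot all_algebra.
From mathcomp Require Import boolp classical_sets topology.
Set Implicit Arguments. Unset Strict Implicit. Unset Printing Implicit Defensive.
Import GRing.Theory.

Local Open Scope classical_set_scope.

Section Grp.
Variable G : profinite_group.
Local Notation "x ** y" := (pg_mul x y) (at level 40, left associativity).
Local Notation one := (pg_one G).
Implicit Types x y z : G.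

Lemma gA x y z : x ** (y ** z) = x ** y ** z. Proof. exact: pg_mulA. Qed.
Lemma g1m x : one ** x = x. Proof. exact: pg_mul1g. Qed.
Lemma gVm x : pg_inv x ** x = one. Proof. exact: pg_mulVg. Qed.
Lemma gmV x : x ** pg_inv x = one.
Proof.
by rewrite -[x ** _]g1m -{1}(gVm (pg_inv x)) -gA (gA (pg_inv x)) gVm g1m gVm.
Qed.
Lemma gm1 x : x ** one = x.
Proof. by rewrite -(gVm x) gA gmV g1m. Qed.
Lemma gKm x y : pg_inv x ** (x ** y) = y. Proof. by rewrite gA gVm g1m. Qed.
Lemma gKVm x y : x ** (pg_inv x ** y) = y. Proof. by rewrite gA gmV g1m. Qed.
Lemma gmK x y : x ** y ** pg_inv y = x. Proof. by rewrite -gA gmV gm1. Qed.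
Lemma gmKV x y : x ** pg_inv y ** y = x. Proof. by rewrite -gA gVm gm1. Qed.
Lemma gmI x y z : x ** y = x ** z -> y = z.
Proof. by move=> h; rewrite -(gKm x y) h gKm. Qed.
Lemma gIm x y z : y ** x = z ** x -> y = z.
Proof. by move=> h; rewrite -(gmK y x) h gmK. Qed.
Lemma gVK x : pg_inv (pg_inv x) = x.
Proof. by apply: (@gIm (pg_inv x)); rewrite gVm gmV. Qed.
Lemma gVM x y : pg_inv (x ** y) = pg_inv y ** pg_inv x.
Proof. by apply: (@gIm (x ** y)); rewrite gVm gA gmKV gVm. Qed.
Lemma gV1 : pg_inv one = one.
Proof. by rewrite -[pg_inv one]gm1 gVm. Qed.
Lemma gVinj x y : pg_inv x = pg_inv y -> x = y.
Proof. by move=> h; rewrite -(gVK x) h gVK. Qed.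

Definition subgrp (H : set G) := is_subgroup H.
Lemma sg1 H : is_subgroup H -> H one. Proof. by case. Qed.
Lemma sgM H x y : is_subgroup H -> H x -> H y -> H (x ** y).
Proof. by case=> _ [h _]; apply: h. Qed.
Lemma sgV H x : is_subgroup H -> H x -> H (pg_inv x).
Proof. by case=> _ [_ h]; apply: h. Qed.
Lemma sgVE H x : is_subgroup H -> H (pg_inv x) -> H x.
Proof. by move=> sH /(sgV sH); rewrite gVK. Qed.

End Grp.

Local Open Scope classical_set_scope.

Lemma compact_directed (T : topologicalType) (K : set T) (D : set (set T)) :
  compact K -> (forall O, D O -> open O) -> (exists O, D O) ->
  (forall O1 O2, D O1 -> D O2 -> exists2 O3, D O3 & O1 `|` O2 `<=` O3) ->
  (forall x, K x -> exists2 O, D O & O x) -> exists2 O, D O & K `<=` O.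
Proof.
move=> cK oD [O0 DO0] dir cov.
apply: contrapT => nc.
have ne : forall O, D O -> exists x, K x /\ ~ O x.
  move=> O DO; apply: contrapT => hn; apply: nc; exists O => // x Kx.
  by apply: contrapT => nOx; apply: hn; exists x.
pose F := filter_from D (fun O => K `\` O).
have FF : Filter F.
  apply: filter_from_filter; first by exists O0.
  move=> O1 O2 D1 D2; have [O3 D3 s3] := dir _ _ D1 D2.
  exists O3 => // x [Kx nO3]; split; split => // h; apply: nO3; apply: s3;
   by [left|right].
have PF : ProperFilter F.
  apply: (filter_from_proper FF) => O DO.
  by have [x [Kx nOx]] := ne _ DO; exists x.
have FK : F K by exists O0 => // x [].
have [x [Kx clx]] := cK F PF FK.
have [O DO Ox] := cov _ Kx.
have nO : nbhs x O by apply: open_nbhs_nbhs; split => //; exact: oD.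
have [y [[_ nOy] Oy]] := clx (K `\` O) O (ex_intro2 _ _ O DO (fun _ h => h)) nO.
by apply: nOy.
Qed.

Section Topo.
Variable G : profinite_group.
Local Notation "x ** y" := (pg_mul x y) (at level 40, left associativity).
Local Notation one := (pg_one G).
Implicit Types x y z : G.

Lemma nbhs_prod (T U : topologicalType) (a : T) (b : U) (P : set (T * U)) :
  nbhs (a, b) P -> exists A B, [/\ nbhs a A, nbhs b B &
    forall u v, A u -> B v -> P (u, v)].
Proof.
case=> [[A B] /= [nA nB] sAB]; exists A, B; split => // u v Au Bv.
exact: (sAB (u, v)).
Qed.

Lemma mul_nbhs x y W : nbhs (x ** y) W -> exists A B, [/\ nbhs x A, nbhs y B &
    forall a b, A a -> B b -> W (a ** b)].
Proof.
move=> nW; have h : nbhs ((x, y).1 ** (x, y).2) W := nW.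
have := pg_mul_cont h => /= /nbhs_prod [A [B [nA nB sAB]]].
by exists A, B; split => // a b Aa Bb; exact: (sAB a b Aa Bb).
Qed.

Lemma nbhs_lmul a x W : nbhs (a ** x) W -> nbhs x [set y | W (a ** y)].
Proof.
move=> /mul_nbhs [A [B [nA nB sAB]]]; apply: filterS nB => b Bb.
by apply: sAB => //; exact: nbhs_singleton.
Qed.

Lemma nbhs_rmul a x W : nbhs (x ** a) W -> nbhs x [set y | W (y ** a)].
Proof.
move=> /mul_nbhs [A [B [nA nB sAB]]]; apply: filterS nA => b Bb.
by apply: sAB => //; exact: nbhs_singleton.
Qed.

Lemma nbhs_inv x W : nbhs (pg_inv x) W -> nbhs x [set y | W (pg_inv y)].
Proof. by move=> nW; exact: (pg_inv_cont nW). Qed.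

Lemma open_from_nbhs (S : set G) : (forall x, S x -> nbhs x S) -> open S.
Proof. by move=> h; rewrite openE => x /h. Qed.

Lemma open_nbhs' (S : set G) x : open S -> S x -> nbhs x S.
Proof. by move=> oS Sx; apply: open_nbhs_nbhs; split. Qed.

End Topo.

Local Open Scope classical_set_scope.

Section ZD.
Variable G : profinite_group.
Local Notation "x ** y" := (pg_mul x y) (at level 40, left associativity).
Local Notation one := (pg_one G).
Implicit Types x y z : G.

Definition Qset : set G := [set x | forall C, clopen C -> C one -> C x].

Lemma Qset_closed : closed Qset.
Proof.
move=> x clx C cC C1; apply: contrapT => nCx.
have nb : nbhs x (~` C).
  by apply: open_nbhs' => //; apply: closed_openC; case: cC.
by have [y [Qy nCy]] := clx _ nb; apply: nCy; exact: Qy.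
Qed.

Lemma sep_lemma (A B : set G) : closed A -> closed B -> A `&` B = set0 ->
  Qset `<=` A `|` B -> A one -> Qset `<=` A.
Proof.
move=> clA clB AB0 QAB A1.
have nT := compact_normal (@pg_hausdorff G) (@pg_compact G).
have snB : set_nbhs A (~` B).
  apply/set_nbhsP; exists (~` B); split => //; first exact: closed_openC.
  by move=> a Aa Ba; have : (A `&` B) a by []; rewrite AB0.
have [V snV clV] := nT A clA _ snB.
have [O [oO AO OV]] := (set_nbhsP _ _).1 snV.
pose W := ~` closure V.
have oW : open W by apply: closed_openC; exact: closed_closure.
have BW : B `<=` W by move=> b Bb clb; exact: (clV b clb Bb).
have OW0 : forall x, O x -> W x -> False.
  by move=> x Ox; apply; apply: subset_closure; exact: OV.
pose K := ~` (O `|` W).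
have cK : compact K.
  apply: (subclosed_compact _ (@pg_compact G)) => //.
  by apply: open_closedC; exact: openU.
pose D := [set Z : set G | exists C, [/\ clopen C, C one & Z = ~` C]].
have [Z [C [cC C1 ->]] KC] : exists2 Z, D Z & K `<=` Z.
  apply: compact_directed => //.
  - by move=> Z [C [[_ cC] _ ->]]; exact: closed_openC.
  - by exists (~` setT); exists setT; split => //; exact: clopenT.
  - move=> Z1 Z2 [C1 [cC1 C11 ->]] [C2 [cC2 C21 ->]].
    exists (~` (C1 `&` C2)); first by exists (C1 `&` C2); split => //; exact: clopenI.
    by move=> x [h|h] [h1 h2]; apply: h.
  - move=> x Kx; apply: contrapT => hn; apply: Kx.
    have Qx : Qset x.
      move=> C cC C1; apply: contrapT => nCx; apply: hn.
      by exists (~` C) => //; exists C.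
    by case: (QAB x Qx) => [/AO|/BW] h; [left|right].
have CW : forall x, C x -> (O `|` W) x.
  by move=> x Cx; apply: contrapT => h; exact: (KC x h Cx).
have cCO : clopen (C `&` O).
  split; first by apply: openI => //; case: cC.
  have -> : C `&` O = C `&` ~` W.
    apply/seteqP; split => x [Cx h]; split => //.
    - by move=> Wx; exact: OW0 Wx.
    - by case: (CW x Cx).
  by apply: closedI; [case: cC | exact: open_closedC].
move=> x Qx; have [_ Ox] := Qx _ cCO (conj C1 (AO _ A1)).
by case: (QAB x Qx) => // /BW Wx; exfalso; exact: OW0 Wx.
Qed.

Lemma Qset_connected : connected Qset.
Proof.
move=> B [b Bb] [O oO BQO] [Cl cCl BQC].
have clA1 : closed (Qset `&` Cl) by apply: closedI => //; exact: Qset_closed.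
have clA2 : closed (Qset `&` ~` O).
  by apply: closedI; [exact: Qset_closed | exact: open_closedC].
have BO : forall y, B y -> O y by move=> y; rewrite BQO => -[].
have BQ : forall y, B y -> Qset y by move=> y; rewrite BQO => -[].
have dis : (Qset `&` Cl) `&` (Qset `&` ~` O) = set0.
  apply/seteqP; split => // y [[Qy Cy] [_ nOy]]; apply: nOy; apply: BO.
  by rewrite BQC.
have cov : Qset `<=` (Qset `&` Cl) `|` (Qset `&` ~` O).
  move=> y Qy; have [Oy|nOy] := pselect (O y); last by right.
  have By : B y by rewrite BQO.
  by left; move: By; rewrite BQC.
have [B1|nB1] := pselect (B one).
  have A11 : (Qset `&` Cl) one by move: B1; rewrite BQC.
  have h := sep_lemma clA1 clA2 dis cov A11.
  apply/seteqP; split => y; first exact: BQ.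
  by move=> /h; rewrite -BQC.
have Q1 : Qset one by [].
have A21 : (Qset `&` ~` O) one.
  by split => // O1; apply: nB1; rewrite BQO.
rewrite setUC in cov.
have h := sep_lemma clA2 clA1 _ cov A21.
rewrite setIC in h; have [_ nOb] := h dis b (BQ b Bb).
by exfalso; exact: nOb (BO b Bb).
Qed.

Lemma Qset1 : Qset `<=` [set one].
Proof.
have h := connected_component_max (A := setT) (x := one) (B := Qset).
rewrite -(@pg_tot_disc G one I); apply: h => //.
exact: Qset_connected.
Qed.

Lemma zero_dim W : nbhs one W -> exists C, [/\ clopen C, C one & C `<=` W].
Proof.
move=> nW; pose W' := W°.
have oW' : open W' by exact: open_interior.
have W'1 : W' one by exact: nW.
pose K := ~` W'.
have cK : compact K.
  by apply: (subclosed_compact _ (@pg_compact G)) => //; exact: open_closedC.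
pose D := [set Z : set G | exists C, [/\ clopen C, C one & Z = ~` C]].
have [Z [C [cC C1 ->]] KC] : exists2 Z, D Z & K `<=` Z.
  apply: compact_directed => //.
  - by move=> Z [C [[_ cC] _ ->]]; exact: closed_openC.
  - by exists (~` setT); exists setT; split => //; exact: clopenT.
  - move=> Z1 Z2 [C1 [cC1 C11 ->]] [C2 [cC2 C21 ->]].
    exists (~` (C1 `&` C2)); first by exists (C1 `&` C2); split => //; exact: clopenI.
    by move=> x [h|h] [h1 h2]; apply: h.
  - move=> x Kx; have nQ : ~ Qset x.
      by move=> /Qset1 xe; apply: Kx; rewrite xe.
    apply: contrapT => hn; apply: nQ => C cC C1; apply: contrapT => nCx.
    by apply: hn; exists (~` C) => //; exists C.
exists C; split => // x Cx; apply: interior_subset.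
by apply: contrapT => h; exact: (KC x h Cx).
Qed.

End ZD.

Local Open Scope classical_set_scope.

Section OSG.
Variable G : profinite_group.
Local Notation "x ** y" := (pg_mul x y) (at level 40, left associativity).
Local Notation one := (pg_one G).
Implicit Types x y z : G.

Inductive gen (V : set G) : G -> Prop :=
| gen1 : gen V one
| genM x v : gen V x -> V v -> gen V (x ** v).

Lemma genMM V x y : gen V x -> gen V y -> gen V (x ** y).
Proof.
move=> gx; elim => [|y' v _ ih Vv]; first by rewrite gm1.
by rewrite gA; apply: genM.
Qed.

Lemma genV V x : (forall v, V v -> V (pg_inv v)) -> gen V x -> gen V (pg_inv x).
Proof.
move=> sV; elim => [|y v _ ih Vv]; first by rewrite gV1; exact: gen1.
rewrite gVM; apply: genMM => //; rewrite -[pg_inv v]g1m; apply: genM.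
  exact: gen1.
exact: sV.
Qed.

Lemma subgroup_open (S : set G) : is_subgroup S -> nbhs one S -> open S.
Proof.
move=> sS n1; apply: open_from_nbhs => x Sx.
have : nbhs (pg_inv x ** x) S by rewrite gVm.
move=> /nbhs_lmul; apply: filterS => y /= h.
by rewrite -(gKVm x y); apply: sgM.
Qed.

Lemma open_subgroup_in C : clopen C -> C one ->
  exists S, [/\ open S, is_subgroup S & S `<=` C].
Proof.
move=> cC C1; have oC : open C by case: cC.
have kC : compact C.
  by apply: (subclosed_compact _ (@pg_compact G)) => //; case: cC.
pose D := [set O : set G | open O /\ exists V, nbhs one V /\
  forall a v, O a -> V v -> C (a ** v)].
have [O [oO [V [nV hV]]] CO] : exists2 O, D O & C `<=` O.
  apply: compact_directed => //.
  - by move=> O [].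
  - by exists set0; split; [exact: open0 | exists setT; split => //; exact: filterT].
  - move=> O1 O2 [o1 [V1 [n1 h1]]] [o2 [V2 [n2 h2]]].
    exists (O1 `|` O2) => //; split; first exact: openU.
    exists (V1 `&` V2); split; first exact: filterI.
    by move=> a v [Oa|Oa] [v1 v2]; [exact: h1|exact: h2].
  - move=> x Cx; have : nbhs (x ** one) C by rewrite gm1; exact: open_nbhs'.
    move=> /mul_nbhs [A [B [nA nB sAB]]].
    exists A°; last exact: nA.
    split; first exact: open_interior.
    exists B; split => // a v /interior_subset Aa Bv; exact: sAB.
pose V' := V `&` [set v | V (pg_inv v)].
have nV' : nbhs one V'.
  apply: filterI => //; apply: nbhs_inv; by rewrite gV1.
have sV' : forall v, V' v -> V' (pg_inv v).
  by move=> v [h1 h2]; split => //=; rewrite gVK.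
have sgS : is_subgroup (gen V').
  split; first exact: gen1.
  split; first by move=> x y; exact: genMM.
  by move=> x; apply: genV.
exists (gen V'); split => //.
  apply: subgroup_open => //; apply: filterS nV' => v V'v.
  by rewrite -[v]g1m; apply: genM => //; exact: gen1.
move=> w; elim => [|x v _ ih [Vv _]] //; exact: hV (CO _ ih) Vv.
Qed.

Definition nos (N : set G) :=
  [/\ open N, is_subgroup N & forall g x, N x -> N (pg_inv g ** x ** g)].

Lemma conjM g x y : pg_inv g ** (x ** y) ** g =
  (pg_inv g ** x ** g) ** (pg_inv g ** y ** g).
Proof. by rewrite !gA gmK. Qed.

Lemma conjV g x : pg_inv g ** pg_inv x ** g = pg_inv (pg_inv g ** x ** g).
Proof. by rewrite !gVM gVK gA. Qed.

Lemma conjJ g h x : pg_inv g ** (pg_inv h ** x ** h) ** g =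
  pg_inv (h ** g) ** x ** (h ** g).
Proof. by rewrite gVM !gA. Qed.

Lemma conj1 g : pg_inv g ** one ** g = one.
Proof. by rewrite gm1 gVm. Qed.

Lemma normal_core S : open S -> is_subgroup S -> exists N, nos N /\ N `<=` S.
Proof.
move=> oS sS.
pose N := [set x | forall g, S (pg_inv g ** x ** g)].
have sN : is_subgroup N.
  split; first by move=> g; rewrite conj1; exact: sg1.
  split; first by move=> x y Nx Ny g; rewrite conjM; apply: sgM.
  by move=> x Nx g; rewrite conjV; apply: sgV.
exists N; split; last by move=> x /(_ one); rewrite gV1 g1m gm1.
split => //; last by move=> h x Nx g; rewrite conjJ.
apply: subgroup_open => //.
pose D := [set O : set G | open O /\ exists V, nbhs one V /\
  forall g v, O g -> V v -> S (pg_inv g ** v ** g)].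
have [O [oO [V [nV hV]]] TO] : exists2 O, D O & [set: G] `<=` O.
  apply: compact_directed => //; first exact: pg_compact.
  - by move=> O [].
  - by exists set0; split; [exact: open0 | exists setT; split => //; exact: filterT].
  - move=> O1 O2 [o1 [V1 [n1 h1]]] [o2 [V2 [n2 h2]]].
    exists (O1 `|` O2) => //; split; first exact: openU.
    exists (V1 `&` V2); split; first exact: filterI.
    by move=> a v [Oa|Oa] [v1 v2]; [exact: h1|exact: h2].
  - move=> g _; exists [set g' | S (pg_inv g ** g')]; last by rewrite /= gVm; exact: sg1.
    split.
      apply: open_from_nbhs => g' Sg'.
      exact: (nbhs_lmul (open_nbhs' oS Sg')).
    exists [set v | S (pg_inv g ** v ** g)]; split.
      have h : nbhs (pg_inv g ** one ** g) S by rewrite conj1; apply: open_nbhs' => //; exact: sg1.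
      exact: (nbhs_lmul (nbhs_rmul h)).
    move=> g' v /= Sg' Sv.
    rewrite -(gKVm g g') -conjJ.
    exact: (sgM sS (sgM sS (sgV sS Sg') Sv) Sg').
by apply: filterS nV => v Vv g; apply: hV => //; exact: TO.
Qed.

Lemma nos_basis W : nbhs one W -> exists N, nos N /\ N `<=` W.
Proof.
move=> /zero_dim [C [cC C1 CW]].
have [S [oS sS SC]] := open_subgroup_in cC C1.
have [N [nN NS]] := normal_core oS sS.
by exists N; split => // x /NS /SC /CW.
Qed.

End OSG.

Local Open Scope classical_set_scope.

Section UC.
Variable G : profinite_group.
Local Notation "x ** y" := (pg_mul x y) (at level 40, left associativity).
Local Notation one := (pg_one G).
Implicit Types x y z : G.

Lemma nosT : @nos G [set: G].
Proof. by split => //; exact: openT. Qed.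

Lemma nosI (N1 N2 : set G) : nos N1 -> nos N2 -> nos (N1 `&` N2).
Proof.
move=> [o1 s1 n1] [o2 s2 n2]; split; first exact: openI.
  split; first by split; exact: sg1.
  split; first by move=> x y [a b] [c d]; split; apply: sgM.
  by move=> x [a b]; split; apply: sgV.
by move=> g x [a b]; split; [exact: n1|exact: n2].
Qed.

Lemma nbhs_setX (U V : topologicalType) (u : U) (v : V) P Q :
  nbhs u P -> nbhs v Q -> nbhs (u, v) (P `*` Q).
Proof. by move=> nP nQ; exists (P, Q). Qed.

Lemma open_setX' (U V : topologicalType) (P : set U) (Q : set V) :
  open P -> open Q -> open (P `*` Q).
Proof.
move=> oP oQ; rewrite openE => -[u v] [Pu Qv].
by apply: nbhs_setX; apply: open_nbhs_nbhs; split.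
Qed.

Definition inv1 (D N : set G) (T : Type) (f : G -> T) :=
  forall x n, D x -> N n -> D (x ** n) -> f (x ** n) = f x.

Definition inv2 (D N : set G) (T : Type) (c : G -> G -> T) :=
  forall x y n m, D x -> D y -> N n -> N m -> D (x ** n) -> D (y ** m) ->
    c (x ** n) (y ** m) = c x y.

Lemma inv1S (D N N' : set G) T (f : G -> T) : N' `<=` N -> inv1 D N f -> inv1 D N' f.
Proof. by move=> s h x n Dx /s Nn; apply: h. Qed.

Lemma inv2S (D N N' : set G) T (c : G -> G -> T) : N' `<=` N -> inv2 D N c -> inv2 D N' c.
Proof. by move=> s h x y n m Dx Dy /s Nn /s Nm; apply: h. Qed.

Lemma uc1 (D : set G) (T : Type) (f : G -> T) : closed D ->
  (forall a, exists U, open U /\ U `&` D = D `&` f @^-1` [set a]) ->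
  exists N, nos N /\ inv1 D N f.
Proof.
move=> clD cf.
have kD : compact D by apply: (subclosed_compact clD (@pg_compact G)).
pose Df := [set O : set G | open O /\ exists N, nos N /\
  forall x n, O x -> D x -> N n -> D (x ** n) -> f (x ** n) = f x].
have [O [oO [N [nN hN]]] DO] : exists2 O, Df O & D `<=` O.
  apply: compact_directed => //.
  - by move=> O [].
  - by exists set0; split; [exact: open0 | exists setT; split => //; exact: nosT].
  - move=> O1 O2 [o1 [N1 [n1 h1]]] [o2 [N2 [n2 h2]]].
    exists (O1 `|` O2) => //; split; first exact: openU.
    exists (N1 `&` N2); split; first exact: nosI.
    by move=> a v [Oa|Oa] Da [v1 v2]; [exact: h1|exact: h2].
  - move=> x Dx; have [U [oU eU]] := cf (f x).
    have fU : forall y, U y -> D y -> f y = f x.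
      by move=> y Uy Dy; have : (U `&` D) y by []; rewrite eU => -[].
    have Ux : U x by have : (D `&` f @^-1` [set f x]) x by []; rewrite -eU => -[].
    have : nbhs (x ** one) U by rewrite gm1; exact: open_nbhs'.
    move=> /mul_nbhs [A [B [nA nB sAB]]].
    have [N [nN NB]] := nos_basis nB.
    exists A°; last exact: nA.
    split; first exact: open_interior.
    exists N; split => // y n /interior_subset Ay Dy Nn Dyn.
    rewrite (fU _ _ Dyn); last by apply: sAB => //; exact: NB.
    rewrite (fU _ _ Dy) // -[y]gm1; apply: sAB => //; exact: nbhs_singleton.
exists N; split => // x n Dx; apply: hN => //; exact: DO.
Qed.

Lemma uc2 (D : set G) (T : Type) (c : G -> G -> T) : closed D ->
  (forall a, exists U : set (G * G), open U /\
     U `&` (D `*` D) = (D `*` D) `&` (fun xy : G * G => c xy.1 xy.2) @^-1` [set a]) ->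
  exists N, nos N /\ inv2 D N c.
Proof.
move=> clD cf.
have kD : compact D by apply: (subclosed_compact clD (@pg_compact G)).
have kDD : compact (D `*` D) by exact: compact_setX.
pose Df := [set O : set (G * G) | open O /\ exists N, nos N /\
  forall x y n m, O (x, y) -> D x -> D y -> N n -> N m -> D (x ** n) -> D (y ** m) ->
    c (x ** n) (y ** m) = c x y].
have [O [oO [N [nN hN]]] DO] : exists2 O, Df O & D `*` D `<=` O.
  apply: compact_directed => //.
  - by move=> O [].
  - by exists set0; split; [exact: open0 | exists setT; split => //; exact: nosT].
  - move=> O1 O2 [o1 [N1 [n1 h1]]] [o2 [N2 [n2 h2]]].
    exists (O1 `|` O2) => //; split; first exact: openU.
    exists (N1 `&` N2); split; first exact: nosI.
    by move=> x y n m [Oa|Oa] Dx Dy [? ?] [? ?]; [exact: h1|exact: h2].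
  - move=> [x y] [Dx Dy]; have [U [oU eU]] := cf (c x y).
    have fU : forall u v, U (u, v) -> D u -> D v -> c u v = c x y.
      by move=> u v Uy Du Dv; have : (U `&` (D `*` D)) (u, v) by []; rewrite eU => -[].
    have Ux : U (x, y).
      by have : ((D `*` D) `&` (fun xy : G * G => c xy.1 xy.2) @^-1` [set c x y]) (x, y) by [];
        rewrite -eU => -[].
    have /nbhs_prod [A [B [nA nB sAB]]] : nbhs (x, y) U by apply: open_nbhs_nbhs; split.
    have : nbhs (x ** one) A by rewrite gm1.
    move=> /mul_nbhs [A1 [B1 [nA1 nB1 sAB1]]].
    have : nbhs (y ** one) B by rewrite gm1.
    move=> /mul_nbhs [A2 [B2 [nA2 nB2 sAB2]]].
    have [N [nN NB]] := nos_basis (filterI nB1 nB2).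
    exists (A1° `*` A2°); last by split; [exact: nA1|exact: nA2].
    split; first by apply: open_setX'; exact: open_interior.
    exists N; split => // u v n m [/interior_subset Au /interior_subset Av] Du Dv Nn Nm Dun Dvm.
    have b1 : B1 one by exact: nbhs_singleton.
    have b2 : B2 one by exact: nbhs_singleton.
    rewrite (fU _ _ _ Dun Dvm); last first.
      by apply: sAB; [apply: sAB1 => //; case: (NB _ Nn)|apply: sAB2 => //; case: (NB _ Nm)].
    by rewrite (fU _ _ _ Du Dv) // -[u]gm1 -[v]gm1; apply: sAB; [apply: sAB1|apply: sAB2].
exists N; split => // x y n m Dx Dy; apply: hN => //; exact: DO.
Qed.

End UC.

Local Open Scope classical_set_scope.

Section Ext.
Variable G : profinite_group.
Local Notation "x ** y" := (pg_mul x y) (at level 40, left associativity).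
Local Notation one := (pg_one G).
Implicit Types x y z : G.
Variable N : set G.
Hypothesis nN : nos N.

Let sN : is_subgroup N. Proof. by case: nN. Qed.
Let oN : open N. Proof. by case: nN. Qed.
Let normN g x : N x -> N (pg_inv g ** x ** g). Proof. by case: nN => _ _; apply. Qed.

Definition UN (D : set G) := [set x | exists2 h, D h & N (pg_inv h ** x)].
Definition rep (D : set G) x := xget one [set h | D h /\ N (pg_inv h ** x)].
Definition ext (D : set G) (T : Type) (f : G -> T) x := f (rep D x).
Definition ext2 (D : set G) (T : Type) (c : G -> G -> T) x y :=
  c (rep D x) (rep D y).

Lemma classM a b x y : N (pg_inv a ** x) -> N (pg_inv b ** y) ->
  N (pg_inv (a ** b) ** (x ** y)).
Proof.
move=> n1 n2.
have -> : pg_inv (a ** b) ** (x ** y) =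
  (pg_inv b ** (pg_inv a ** x) ** b) ** (pg_inv b ** y).
  by rewrite gVM !gA gmK.
by apply: sgM => //; exact: normN.
Qed.

Lemma classT a b y : N (pg_inv a ** y) -> N (pg_inv b ** y) -> N (pg_inv a ** b).
Proof.
move=> n1 n2; have -> : pg_inv a ** b = (pg_inv a ** y) ** pg_inv (pg_inv b ** y).
  by rewrite gVM gVK gA gmK.
by apply: sgM => //; apply: sgV.
Qed.

Lemma classR a : N (pg_inv a ** a). Proof. by rewrite gVm; exact: sg1. Qed.

Lemma rep_spec (D : set G) x : UN D x -> D (rep D x) /\ N (pg_inv (rep D x) ** x).
Proof. by move=> [h Dh Nh]; apply: (@xgetPex _ one [set h | D h /\ N (pg_inv h ** x)]); exists h. Qed.

Lemma rep_mulN (D : set G) x n : N n -> rep D (x ** n) = rep D x.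
Proof.
move=> Nn; rewrite /rep; congr xget; apply/seteqP; split => h [Dh Nh]; split => //.
  have -> : pg_inv h ** x = pg_inv h ** (x ** n) ** pg_inv n by rewrite gA gmK.
  by apply: sgM => //; apply: sgV.
by rewrite gA; apply: sgM.
Qed.

Lemma ext_mulN (D : set G) T (f : G -> T) x n : N n -> ext D f (x ** n) = ext D f x.
Proof. by move=> Nn; rewrite /ext rep_mulN. Qed.

Lemma ext2_mulN (D : set G) T (c : G -> G -> T) x y n m : N n -> N m ->
  ext2 D c (x ** n) (y ** m) = ext2 D c x y.
Proof. by move=> Nn Nm; rewrite /ext2 !rep_mulN. Qed.

Lemma inv1_class (D : set G) T (f : G -> T) a b : inv1 D N f -> D a -> D b ->
  N (pg_inv a ** b) -> f b = f a.
Proof.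
move=> hf Da Db Nab; rewrite -[b](gKVm a); apply: hf => //.
by rewrite gKVm.
Qed.

Lemma inv2_class (D : set G) T (c : G -> G -> T) a1 a2 b1 b2 : inv2 D N c ->
  D a1 -> D a2 -> D b1 -> D b2 ->
  N (pg_inv a1 ** b1) -> N (pg_inv a2 ** b2) -> c b1 b2 = c a1 a2.
Proof.
move=> hc Da1 Da2 Db1 Db2 N1 N2; rewrite -[b1](gKVm a1) -[b2](gKVm a2).
by apply: hc => //; rewrite gKVm.
Qed.

Lemma ext_class (D : set G) T (f : G -> T) y y' : inv1 D N f -> D y' ->
  N (pg_inv y' ** y) -> ext D f y = f y'.
Proof.
move=> hf Dy' Ny; have [Dr Nr] := rep_spec (ex_intro2 _ _ y' Dy' Ny).
by rewrite /ext (inv1_class hf Dy' Dr) //; apply: (classT Ny).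
Qed.

Lemma ext_eq (D : set G) T (f : G -> T) x : inv1 D N f -> D x -> ext D f x = f x.
Proof. by move=> hf Dx; apply: ext_class => //; exact: classR. Qed.

Lemma ext2_class (D : set G) T (c : G -> G -> T) x y x' y' : inv2 D N c ->
  D x' -> D y' -> N (pg_inv x' ** x) -> N (pg_inv y' ** y) -> ext2 D c x y = c x' y'.
Proof.
move=> hc Dx' Dy' Nx Ny.
have [Dr1 Nr1] := rep_spec (ex_intro2 _ _ x' Dx' Nx).
have [Dr2 Nr2] := rep_spec (ex_intro2 _ _ y' Dy' Ny).
rewrite /ext2 (inv2_class hc Dx' Dy' Dr1 Dr2) //.
  exact: (classT Nx).
exact: (classT Ny).
Qed.

Lemma ext2_eq (D : set G) T (c : G -> G -> T) x y : inv2 D N c -> D x -> D y ->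
  ext2 D c x y = c x y.
Proof. by move=> hc Dx Dy; apply: ext2_class => //; exact: classR. Qed.

Lemma fiber_open T (g : G -> T) a : (forall x n, N n -> g (x ** n) = g x) ->
  open (g @^-1` [set a]).
Proof.
move=> hg; apply: open_from_nbhs => x gx.
have : nbhs (pg_inv x ** x) N by rewrite gVm; apply: open_nbhs' => //; exact: sg1.
move=> /nbhs_lmul; apply: filterS => y /= Ny.
by rewrite -(gKVm x y) hg.
Qed.

Lemma fiber_open2 T (c : G -> G -> T) a :
  (forall x y n m, N n -> N m -> c (x ** n) (y ** m) = c x y) ->
  open ((fun xy : G * G => c xy.1 xy.2) @^-1` [set a]).
Proof.
move=> hc; rewrite openE => -[x y] /= cxy.
have nx : nbhs x [set u | N (pg_inv x ** u)].
  have : nbhs (pg_inv x ** x) N by rewrite gVm; apply: open_nbhs' => //; exact: sg1.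
  exact: nbhs_lmul.
have ny : nbhs y [set u | N (pg_inv y ** u)].
  have : nbhs (pg_inv y ** y) N by rewrite gVm; apply: open_nbhs' => //; exact: sg1.
  exact: nbhs_lmul.
apply: filterS (nbhs_setX nx ny) => -[u v] [/= Nu Nv].
by rewrite -(gKVm x u) -(gKVm y v) hc.
Qed.

Variable p : nat.

Lemma cont_ext (D E : set G) (f : G -> 'F_p) : cont_on E (ext D f).
Proof.
move=> a; exists (ext D f @^-1` [set a]); split; last by rewrite setIC.
by apply: fiber_open => x n; exact: ext_mulN.
Qed.

Lemma cont_ext2 (D E : set G) (c : G -> G -> 'F_p) :
  cont_on (E `*` E) (fun xy : G * G => ext2 D c xy.1 xy.2).
Proof.
move=> a; exists ((fun xy : G * G => ext2 D c xy.1 xy.2) @^-1` [set a]); split;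
  last by rewrite setIC.
by apply: fiber_open2 => x y n m; exact: ext2_mulN.
Qed.

Lemma cont_onS (X : topologicalType) (D E : set X) (f : X -> 'F_p) :
  E `<=` D -> cont_on D f -> cont_on E f.
Proof.
move=> ED cf a; have [U [oU eU]] := cf a; exists U; split => //.
apply/seteqP; split => x [h1 h2].
  have : (U `&` D) x by split => //; apply: ED.
  by rewrite eU => -[].
have : (D `&` f @^-1` [set a]) x by split => //; apply: ED.
by rewrite -eU => -[].
Qed.

Lemma UN_open_subgroup (H : set G) : is_subgroup H -> open_subgroup (UN H).
Proof.
move=> sH; split.
  apply: open_from_nbhs => x [h Hh Nh].
  have : nbhs (pg_inv x ** x) N by rewrite gVm; apply: open_nbhs' => //; exact: sg1.
  move=> /nbhs_lmul; apply: filterS => y /= Ny; exists h => //.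
  by rewrite -(gKVm x y) gA; apply: sgM.
split; first by exists one; [exact: sg1 | exact: classR].
split; first by move=> x y [a Ha Na] [b Hb Nb]; exists (a ** b); [exact: sgM|exact: classM].
move=> x [h Hh Nh]; exists (pg_inv h); first exact: sgV.
rewrite gVK -[h ** _]gVK gVM gVK.
apply: sgV => //.
have := normN (pg_inv h) Nh; by rewrite gVK !gA gmV g1m.
Qed.

Lemma sub_UN (D : set G) : D `<=` UN D.
Proof. by move=> x Dx; exists x => //; exact: classR. Qed.

Lemma UN_mono (D E : set G) : D `<=` E -> UN D `<=` UN E.
Proof. by move=> DE x [h Dh Nh]; exists h => //; apply: DE. Qed.

End Ext.

Local Open Scope classical_set_scope.
Local Open Scope ring_scope.

Section Hom.
Variable G : profinite_group.
Local Notation "x ** y" := (pg_mul x y) (at level 40, left associativity).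
Local Notation one := (pg_one G).
Implicit Types x y z : G.
Variable p : nat.
Hypothesis p_pr : prime p.

Definition ishom (S : set G) (f : G -> 'F_p) :=
  forall x y, S x -> S y -> f (x ** y) = f x + f y.

Variables (S : set G) (f : G -> 'F_p).
Hypotheses (sS : is_subgroup S) (hf : ishom S f).

Lemma hom1g : f one = 0.
Proof.
have := hf (sg1 sS) (sg1 sS); rewrite gm1 => h.
by apply: (@addrI _ (f one)); rewrite addr0 -h.
Qed.

Lemma homV x : S x -> f (pg_inv x) = - f x.
Proof.
move=> Sx; have := hf (sgV sS Sx) Sx; rewrite gVm hom1g => /eqP.
by rewrite eq_sym addr_eq0 => /eqP.
Qed.

Lemma pgpow_in t i : S t -> S (pgpow t i).
Proof. by move=> St; elim: i => [|i ih] /=; [exact: sg1|exact: sgM]. Qed.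

Lemma hom_pow t i : S t -> f (pgpow t i) = f t *+ i.
Proof.
move=> St; elim: i => [|i ih] /=; first exact: hom1g.
by rewrite hf ?ih ?mulrS //; exact: pgpow_in.
Qed.

Lemma ker_subgroup : is_subgroup (kerH S f).
Proof.
split; first by split; [exact: sg1|exact: hom1g].
split; first by move=> x y [Sx fx] [Sy fy]; split; [exact: sgM|rewrite hf // fx fy addr0].
by move=> x [Sx fx]; split; [exact: sgV|rewrite homV // fx oppr0].
Qed.

Lemma exists_t : (exists x, S x /\ f x <> 0) -> exists t, S t /\ f t = 1.
Proof.
move=> [x [Sx fx]]; exists (pgpow x (nat_of_ord (f x)^-1)); split.
  exact: pgpow_in.
by rewrite hom_pow // -mulr_natr natr_Zp mulfV //; apply/eqP.
Qed.

End Hom.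

Local Open Scope classical_set_scope.
Local Open Scope ring_scope.

Section Cor.
Variable G : profinite_group.
Local Notation "x ** y" := (pg_mul x y) (at level 40, left associativity).
Local Notation one := (pg_one G).
Implicit Types x y z : G.
Variable p : nat.
Hypothesis p_pr : prime p.
Let p_gt0 : (0 < p)%N. Proof. exact: prime_gt0. Qed.

Lemma sum_shift (F : nat -> 'F_p) c :
  \sum_(i < p) F ((i + c) %% p)%N = \sum_(i < p) F i.
Proof.
pose h (i : 'I_p) : 'I_p := Ordinal (ltn_pmod (i + c) p_gt0).
have hi : injective h.
  move=> i i' /(congr1 val) /= /eqP; rewrite eqn_modDr !modn_small // => /eqP e.
  exact: val_inj.
by rewrite [RHS](reindex_inj hi).
Qed.

Definition corsum (chi phi : G -> 'F_p) t g :=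
  \sum_(i < p) phi (pgpow t i ** g ** pg_inv (pgpow t ((i + nat_of_ord (chi g)) %% p))).

Lemma grp_id (a b g c d : G) :
  (a ** pg_inv b) ** (b ** g ** pg_inv c) ** pg_inv (d ** pg_inv c) = a ** g ** pg_inv d.
Proof. by rewrite gVM gVK !gA gmKV gmKV. Qed.

Variables (S : set G) (chi phi : G -> 'F_p).
Hypotheses (sS : is_subgroup S) (hchi : ishom S chi) (hphi : ishom (kerH S chi) phi).

Lemma natFp (a : 'F_p) : (nat_of_ord a)%:R = a.
Proof. exact: natr_Zp. Qed.

Lemma kin t g i : S t -> chi t = 1 -> S g ->
  kerH S chi (pgpow t i ** g ** pg_inv (pgpow t ((i + nat_of_ord (chi g)) %% p))).
Proof.
move=> St ct Sg; have Sti := pgpow_in sS i St.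
have Stj := pgpow_in sS ((i + nat_of_ord (chi g)) %% p) St.
split; first by apply: (sgM sS); [exact: (sgM sS)|exact: (sgV sS)].
have SA : S (pgpow t i ** g) by exact: (sgM sS).
have SB := sgV sS Stj.
rewrite (hchi SA SB) (hchi Sti Sg).
rewrite (homV sS hchi Stj) !(hom_pow sS hchi) // ct.
by rewrite Fp_nat_mod // natrD natFp subrr.
Qed.

Lemma cor_indep t s g : S t -> S s -> chi t = 1 -> chi s = 1 -> S g ->
  corsum chi phi s g = corsum chi phi t g.
Proof.
move=> St Ss ct cs Sg; rewrite /corsum.
set c := nat_of_ord (chi g).
pose a (i : nat) := pgpow s i ** pg_inv (pgpow t i).
have ka : forall i, kerH S chi (a i).
  move=> i; have Ssi := pgpow_in sS i Ss; have Sti := pgpow_in sS i St.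
  split; first by apply: (sgM sS) => //; exact: (sgV sS).
  rewrite /a (hchi Ssi (sgV sS Sti)) (homV sS hchi Sti) !(hom_pow sS hchi) //.
  by rewrite ct cs subrr.
have sK := ker_subgroup sS hchi.
have e : forall i : 'I_p,
  phi (pgpow s i ** g ** pg_inv (pgpow s ((i + c) %% p))) =
  phi (a i) + phi (pgpow t i ** g ** pg_inv (pgpow t ((i + c) %% p)))
   - phi (a ((i + c) %% p)%N).
  move=> i; rewrite -(grp_id (pgpow s i) (pgpow t i) g
     (pgpow t ((i + c) %% p)) (pgpow s ((i + c) %% p))).
  have k1 := ka i; have k2 := kin i St ct Sg; have k3 := ka ((i + c) %% p)%N.
  have k3' := sgV sK k3.
  have k12 := sgM sK k1 k2.
  by rewrite (hphi k12 k3') (hphi k1 k2) (homV sK hphi k3).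
rewrite (eq_bigr _ (fun i _ => e i)) big_split /= big_split /=.
rewrite sumrN (sum_shift (fun i => phi (a i))).
by rewrite addrC addrA addNr add0r.
Qed.

End Cor.

Section Compat.
Variable G : profinite_group.
Local Notation "x ** y" := (pg_mul x y) (at level 40, left associativity).
Local Notation one := (pg_one G).
Variable p : nat.
Hypothesis p_pr : prime p.

Lemma cor1_nz (S : set G) (chi phi : G -> 'F_p) g :
  (exists x, S x /\ chi x <> 0) ->
  cor1 S chi phi g = corsum chi phi (xget one [set x | S x /\ chi x = 1]) g.
Proof. by move=> h; rewrite /cor1; case: pselect. Qed.

Lemma cor1_z (S : set G) (chi phi : G -> 'F_p) g :
  ~ (exists x, S x /\ chi x <> 0) -> cor1 S chi phi g = phi g.
Proof. by move=> h; rewrite /cor1; case: pselect. Qed.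

Lemma cor_compat (S S' : set G) (chiS chi' phi : G -> 'F_p) g :
  is_subgroup S -> is_subgroup S' -> S' `<=` S -> ishom S chiS ->
  ishom (kerH S chiS) phi -> (forall x, S' x -> chi' x = chiS x) ->
  ((exists x, S x /\ chiS x <> 0) <-> (exists x, S' x /\ chi' x <> 0)) ->
  S' g -> cor1 S chiS phi g = cor1 S' chi' phi g.
Proof.
move=> sS sS' S'S hS hphi e12 iff Sg.
have [nz|z] := pselect (exists x, S x /\ chiS x <> 0); last first.
  by rewrite !cor1_z // => h; apply: z; exact: iff.2 h.
have nz' := iff.1 nz.
have hS' : ishom S' chi'.
  move=> x y Sx Sy; rewrite !e12 //; last exact: (sgM sS').
  by apply: hS; apply: S'S.
rewrite !cor1_nz //.
have [t [St ct]] := exists_t sS hS nz.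
have [t' [St' ct']] := exists_t sS' hS' nz'.
have [Sx cx] := @xgetPex _ one [set x | S x /\ chiS x = 1] (ex_intro _ t (conj St ct)).
have [Sx' cx'] := @xgetPex _ one [set x | S' x /\ chi' x = 1] (ex_intro _ t' (conj St' ct')).
rewrite /corsum e12 //.
apply: (cor_indep p_pr sS hS hphi); [exact: S'S|exact: Sx|by rewrite -e12|exact: cx|exact: S'S].
Qed.

End Compat.

Local Open Scope classical_set_scope.
Local Open Scope ring_scope.

Section Main.
Variable G : profinite_group.
Local Notation "x ** y" := (pg_mul x y) (at level 40, left associativity).
Local Notation one := (pg_one G).
Implicit Types x y z : G.
Variable p : nat.
Hypothesis p_pr : prime p.

Lemma closed_ker (H : set G) (chi : G -> 'F_p) : closed H -> cont_on H chi ->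
  closed (kerH H chi).
Proof.
move=> clH cchi; rewrite -[kerH H chi]setCK closedC.
apply: open_from_nbhs => x nKx.
have [Hx|nHx] := pselect (H x); last first.
  apply: filterS (open_nbhs' (closed_openC clH) nHx) => y nHy [Hy _]; exact: nHy.
have [U [oU eU]] := cchi (chi x).
have Ux : U x by have : (H `&` chi @^-1` [set chi x]) x by []; rewrite -eU => -[].
apply: filterS (open_nbhs' oU Ux) => y Uy [Hy cy]; apply: nKx; split => //.
have : (U `&` H) y by []; rewrite eU => -[_ /= <-]; exact: cy.
Qed.

Variable N : set G.
Hypothesis nN : nos N.
Let sN : is_subgroup N. Proof. by case: nN. Qed.

Lemma classConj a b h g : N (pg_inv h ** g) ->
  N (pg_inv (a ** h ** b) ** (a ** g ** b)).
Proof.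
move=> Nhg; apply: (classM nN); last exact: classR.
by apply: (classM nN) => //; exact: classR.
Qed.

Lemma ext_mul (D : set G) T (f : G -> T) x y : is_subgroup D -> inv1 D N f ->
  UN N D x -> UN N D y -> ext N D f (x ** y) = f (rep N D x ** rep N D y).
Proof.
move=> sD hf Ux Uy; have [Dx Nx] := rep_spec Ux; have [Dy Ny] := rep_spec Uy.
apply: ext_class => //; first exact: sgM.
exact: classM.
Qed.

Lemma ext_hom (D : set G) (f : G -> 'F_p) : is_subgroup D -> inv1 D N f ->
  ishom D f -> ishom (UN N D) (ext N D f).
Proof.
move=> sD hf hh x y Ux Uy; rewrite ext_mul // hh //; [by case: (rep_spec Ux)|].
by case: (rep_spec Uy).
Qed.

Lemma ext_hom1 (D : set G) (f : G -> 'F_p) : is_subgroup D -> inv1 D N f ->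
  ishom D f -> hom1 (UN N D) (ext N D f).
Proof. by move=> sD hf hh; split; [exact: cont_ext|exact: ext_hom]. Qed.

Lemma hom1S (D E : set G) (f : G -> 'F_p) : E `<=` D -> hom1 D f -> hom1 E f.
Proof.
move=> ED [cf hf]; split; first exact: (cont_onS ED).
by move=> x y Ex Ey; apply: hf; apply: ED.
Qed.

Variables (H : set G) (chi : G -> 'F_p).
Hypotheses (sH : is_subgroup H) (hchi : ishom H chi) (ichi : inv1 H N chi).

Local Notation U := (UN N H).
Local Notation chiU := (ext N H chi).
Local Notation K := (kerH H chi).

Lemma chiU_eq x : H x -> chiU x = chi x.
Proof. by move=> Hx; apply: ext_eq. Qed.

Lemma kerU_sub : kerH U chiU `<=` UN N K.
Proof.
move=> x [Ux cx]; have [Hr Nr] := rep_spec Ux.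
by exists (rep N H x).
Qed.

Lemma K_sub_kerU : K `<=` kerH U chiU.
Proof.
by move=> x [Hx cx]; split; [exact: sub_UN|rewrite chiU_eq].
Qed.

Lemma nz_iff : (exists x, U x /\ chiU x <> 0) <-> (exists x, H x /\ chi x <> 0).
Proof.
split => [[x [Ux cx]]|[x [Hx cx]]].
  by exists (rep N H x); split => //; case: (rep_spec Ux).
by exists x; split; [exact: sub_UN|rewrite chiU_eq].
Qed.

End Main.

Local Open Scope ring_scope.

Theorem mainTheorem11 (p : nat) (p_prime : prime p) (Gamma : profinite_group) :
  (forall U : set Gamma, open_subgroup U -> cup_exact p U) ->
  forall H : set Gamma, closed_subgroup H -> cup_exact p H.
Proof.
move=> hyp H [clH sH] chi [cchi hchi].
have sK := ker_subgroup sH hchi.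
have clK := closed_ker clH cchi.
have [N1 [nN1 i1]] := uc1 clH cchi.
split.
- move=> psi [cpsi hpsi]; split.
  + move=> [f [cf hf]].
    have [N2 [nN2 i2]] := uc1 clH cpsi.
    have [N3 [nN3 i3]] := uc1 clH cf.
    pose N := (N1 `&` N2 `&` N3)%classic.
    have nN : nos N := nosI (nosI nN1 nN2) nN3.
    have iC : inv1 H N chi by apply: inv1S i1 => x [[]].
    have iP : inv1 H N psi by apply: inv1S i2 => x [[]].
    have iF : inv1 H N f by apply: inv1S i3 => x [[]].
    have oU := UN_open_subgroup nN sH.
    have sU : is_subgroup (UN N H) by case: oU.
    have hU := ext_hom1 nN sH iC hchi.
    have hpU := ext_hom1 nN sH iP hpsi.
    have cobU : coboundary2 (UN N H) (cup1 (ext N H chi) (ext N H psi)).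
      exists (ext N H f); split; first exact: cont_ext.
      move=> x y Ux Uy; rewrite (ext_mul nN sH iF Ux Uy).
      have [Hx _] := rep_spec Ux; have [Hy _] := rep_spec Uy.
      exact: hf.
    have [phi [hphi ephi]] := ((hyp _ oU _ hU).1 _ hpU).1 cobU.
    exists phi; split; first exact: (hom1S (K_sub_kerU nN iC) hphi).
    move=> g Hg; rewrite -(ext_eq nN iP Hg) ephi; last exact: sub_UN.
    apply: (cor_compat p_prime) => //.
    * exact: sub_UN.
    * by case: hU.
    * by case: hphi.
    * by move=> x Hx; rewrite (chiU_eq nN iC Hx).
    * exact: (nz_iff nN iC).
  + move=> [phi [[cphi hphi] epsi]].
    have [N2 [nN2 i2]] := uc1 clH cpsi.
    have [N3 [nN3 i3]] := uc1 clK cphi.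
    pose N := (N1 `&` N2 `&` N3)%classic.
    have nN : nos N := nosI (nosI nN1 nN2) nN3.
    have iC : inv1 H N chi by apply: inv1S i1 => x [[]].
    have iP : inv1 H N psi by apply: inv1S i2 => x [[]].
    have iF : inv1 (kerH H chi) N phi by apply: inv1S i3 => x [[]].
    have oU := UN_open_subgroup nN sH.
    have sU : is_subgroup (UN N H) by case: oU.
    have hU := ext_hom1 nN sH iC hchi.
    have hpU := ext_hom1 nN sH iP hpsi.
    have hKU := ext_hom1 nN sK iF hphi.
    have hphU : hom1 (kerH (UN N H) (ext N H chi)) (ext N (kerH H chi) phi).
      by apply: hom1S hKU; exact: kerU_sub.
    have ecor : forall g, UN N H g ->
        ext N H psi g = cor1 (UN N H) (ext N H chi) (ext N (kerH H chi) phi) g.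
      move=> g Ug; have [Hh Nh] := rep_spec Ug.
      rewrite /ext (epsi _ Hh) -/(ext N H chi g) -/(ext N (kerH H chi) phi).
      have [nz|z] := pselect (exists x, H x /\ chi x <> 0).
        have nzU := (nz_iff nN iC).2 nz.
        rewrite (cor1_nz _ _ nz) (cor1_nz _ _ nzU).
        have [t [Ht ct]] := exists_t sH hchi nz.
        have [tU [UtU ctU]] := exists_t sU hU.2 nzU.
        have [HtH ctH] := @xgetPex _ (pg_one Gamma) [set x | H x /\ chi x = 1]%classic
          (ex_intro _ t (conj Ht ct)).
        have [UtU' ctU'] := @xgetPex _ (pg_one Gamma)
          [set x | UN N H x /\ ext N H chi x = 1]%classic (ex_intro _ tU (conj UtU ctU)).
        rewrite (cor_indep p_prime sU hU.2 hphU.2 (sub_UN nN HtH) UtU'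
          (etrans (chiU_eq nN iC HtH) ctH) ctU' Ug).
        rewrite /corsum; apply: eq_bigr => i _.
        have -> : ext N H chi g = chi (rep N H g) by [].
        symmetry; apply: (ext_class nN iF).
          exact: (kin p_prime sH hchi i HtH ctH Hh).
        exact: (classConj nN).
      have zU : ~ (exists x, UN N H x /\ ext N H chi x <> 0).
        by move=> /(nz_iff nN iC).1.
      rewrite (cor1_z _ _ z) (cor1_z _ _ zU).
      symmetry; apply: (ext_class nN iF) => //; split => //.
      by apply: contrapT => cz; apply: z; exists (rep N H g).
    have [f [cf hf]] := ((hyp _ oU _ hU).1 _ hpU).2 (ex_intro _ _ (conj hphU ecor)).
    exists f; split; first exact: (cont_onS (fun x (Hx : H x) => sub_UN nN Hx) cf).
    move=> x y Hx Hy; rewrite /cup1 -(chiU_eq nN iC Hx) -(ext_eq nN iP Hy).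
    exact: hf (sub_UN nN Hx) (sub_UN nN Hy).
- move=> c [cc hc]; split.
  + move=> [f [cf hf]].
    have [N2 [nN2 i2]] := uc2 clH cc.
    have [N3 [nN3 i3]] := uc1 clK cf.
    pose N := (N1 `&` N2 `&` N3)%classic.
    have nN : nos N := nosI (nosI nN1 nN2) nN3.
    have iC : inv1 H N chi by apply: inv1S i1 => x [[]].
    have iC2 : inv2 H N c by apply: inv2S i2 => x [[]].
    have iF : inv1 (kerH H chi) N f by apply: inv1S i3 => x [[]].
    have oU := UN_open_subgroup nN sH.
    have sU : is_subgroup (UN N H) by case: oU.
    have hU := ext_hom1 nN sH iC hchi.
    have ext2M : forall x y z, UN N H x -> UN N H y -> UN N H z ->
        ext2 N H c (pg_mul x y) z = c (pg_mul (rep N H x) (rep N H y)) (rep N H z)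
        /\ ext2 N H c x (pg_mul y z) = c (rep N H x) (pg_mul (rep N H y) (rep N H z)).
      move=> x y z Ux Uy Uz.
      have [Hx Nx] := rep_spec Ux; have [Hy Ny] := rep_spec Uy; have [Hz Nz] := rep_spec Uz.
      split; apply: (ext2_class nN iC2) => //; try exact: (sgM sH);
        exact: (classM nN).
    have cocU : cocycle2 (UN N H) (ext2 N H c).
      split; first exact: cont_ext2.
      move=> x y z Ux Uy Uz; have [e1 e2] := ext2M x y z Ux Uy Uz.
      rewrite e1 e2 /ext2.
      have [Hx _] := rep_spec Ux; have [Hy _] := rep_spec Uy; have [Hz _] := rep_spec Uz.
      exact: hc.
    have cobK : coboundary2 (kerH (UN N H) (ext N H chi)) (ext2 N H c).
      exists (ext N (kerH H chi) f); split; first exact: cont_ext.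
      move=> x y [Ux cx] [Uy cy].
      have [Hx Nx] := rep_spec Ux; have [Hy Ny] := rep_spec Uy.
      have Kx : kerH H chi (rep N H x) by split.
      have Ky : kerH H chi (rep N H y) by split.
      rewrite (ext_class nN iF Kx Nx) (ext_class nN iF Ky Ny).
      rewrite (ext_class nN iF (sgM sK Kx Ky) (classM nN Nx Ny)).
      exact: hf.
    have [psi [hpsiU [g [cg hg]]]] := ((hyp _ oU _ hU).2 _ cocU).1 cobK.
    exists psi; split; first exact: (hom1S (fun x (Hx : H x) => sub_UN nN Hx) hpsiU).
    exists g; split; first exact: (cont_onS (fun x (Hx : H x) => sub_UN nN Hx) cg).
    move=> x y Hx Hy; have := hg x y (sub_UN nN Hx) (sub_UN nN Hy).
    by rewrite /cup1 (chiU_eq nN iC Hx) (ext2_eq nN iC2 Hx Hy).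
  + move=> [psi [_ [g [cg hg]]]]; exists g; split.
      by apply: (cont_onS _ cg) => x [].
    move=> x y [Hx cx] [Hy cy]; have := hg x y Hx Hy.
    by rewrite /cup1 cx mul0r subr0.
Qed.
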